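(* Let $k\ge 0$ and $m=2k+1$. Let $R_m(\hat K)=P_m(\hat K)+\mathrm{span}\{\hat x^m\hat y-\hat x\hat y^m\}$. If $\hat v\in R_m(\hat K)$ vanishes at all points of $G\cup I$, then $\hat v\equiv 0$.
   Context: $\hat K=[-1,1]^2$; $P_m(\hat K)$ is the space of polynomials of total degree $\le m$ on $\hat K$. Let $g_{-k},\dots,g_k$ be the zeros of the Legendre polynomial of degree $2k+1$ on $[-1,1]$. $G=\{(1,g_i),(-1,g_i),(g_i,1),(g_i,-1): i=-k,\dots,k\}$ is the set of $4(2k+1)$ Gauss–Legendre points on the boundary of $\hat K$. $I$ is a set of $(2k-1)(k-1)$ points in the interior of $\hat K$ (the standard Lagrange points) that is unisolvent for $P_{2k-3}(\hat K)$, i.e. every polynomial in $P_{2k-3}(\hat K)$ is uniquely determined by its values on $I$; $I=\emptyset$ when $k\le 1$. *)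

(* Defs.v *)
From HB Require Import structures.
From mathcomp Require Import all_boot all_order all_algebra.
Set Implicit Arguments. Unset Strict Implicit. Unset Printing Implicit Defensive.
Import Order.TTheory GRing.Theory Num.Theory.
Local Open Scope ring_scope.

Definition legendre (R : rcfType) (n : nat) : {poly R} :=
  ((2 ^ n * n `!)%:R)^-1 *: ((('X ^+ 2 - 1) ^+ n)^`(n)).

(* A polynomial of total degree <= m in two variables, given by its
   coefficients c i j (only those with i + j <= m are used), evaluated at (x,y). *)
Definition evalP (R : rcfType) (m : nat) (c : nat -> nat -> R) (x y : R) : R :=
  \sum_(i < m.+1) \sum_(j < (m - i).+1) c i j * x ^+ i * y ^+ j.

(* An element of R_m = P_m + span{x^m y - x y^m}, given by c (P_m part)
   and a (coefficient of the extra function), evaluated at (x,y). *)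
Definition evalR (R : rcfType) (m : nat) (c : nat -> nat -> R) (a x y : R) : R :=
  evalP m c x y + a * (x ^+ m * y - x * y ^+ m).

Definition gaussBoundary (R : rcfType) (n : nat) (g : 'I_n -> R) : seq (R * R) :=
  [seq (1, g i) | i <- enum 'I_n] ++ [seq (-1, g i) | i <- enum 'I_n] ++
  [seq (g i, 1) | i <- enum 'I_n] ++ [seq (g i, -1) | i <- enum 'I_n].

(* Main.v *)
Require Import Defs.
From HB Require Import structures.
From mathcomp Require Import all_boot all_order all_algebra.
From mathcomp Require Import zify ring lra.
Import Order.TTheory GRing.Theory Num.Theory.
Set Implicit Arguments. Unset Strict Implicit. Unset Printing Implicit Defensive.
Local Open Scope ring_scope.

Section Aux.
Variable R : rcfType.

Lemma polyfin (p : {poly R}) :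
  (forall x : R, x != 1 -> x != -1 -> p.[x] = 0) -> p = 0.
Proof.
move=> hp; apply/eqP; apply/negPn/negP => hp0.
have : (size [seq (i.+2)%:R : R | i <- iota 0 (size p)] < size p)%N.
  apply: (max_poly_roots (p:=p)) => //.
  apply/allP => z /mapP [i _ ->]; apply/rootP; apply: hp.
    by rewrite pnatr_eq1.
  apply/eqP => h; have : (0:R) <= (i.+2)%:R := ler0n _ _.
  by rewrite h; lra.
rewrite map_inj_uniq ?iota_uniq //.
by move=> i j /eqP; rewrite eqr_nat eqSS eqSS => /eqP.
by rewrite size_map size_iota ltnn.
Qed.

Definition E (N : nat) (c : nat -> nat -> R) (x y : R) : R :=
  \sum_(i < N) \sum_(j < N) c i j * x ^+ i * y ^+ j.

Definition trunc (n : nat) (c : nat -> nat -> R) i j :=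
  if (i + j <= n)%N then c i j else 0.

Lemma evalP_E n N c x y : (n < N)%N -> evalP n c x y = E N (trunc n c) x y.
Proof.
move=> hn; rewrite /evalP /E.
rewrite (big_ord_widen N (fun i => \sum_(j < (n - i).+1) c i j * x ^+ i * y ^+ j)) //.
rewrite big_mkcond /=; apply: eq_bigr => i _.
case: ifP => hi.
  rewrite (big_ord_widen N (fun j => c i j * x ^+ i * y ^+ j)); last by lia.
  rewrite big_mkcond /=; apply: eq_bigr => j _.
  rewrite /trunc; case: ifP => h1; case: ifP => h2; rewrite ?mul0r //.
    by exfalso; have := negbT h2; lia.
  by exfalso; have := negbT h1; lia.
rewrite big1 // => j _; rewrite /trunc; case: ifP => h1; last by rewrite !mul0r.
by exfalso; have := negbT hi; lia.
Qed.

Lemma E_tr N c x y : E N c x y = E N (fun i j => c j i) y x.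
Proof.
rewrite /E exchange_big /=; apply: eq_bigr => i _; apply: eq_bigr => j _.
by rewrite -!mulrA [_ ^+ j * _]mulrC.
Qed.

Lemma E_polyx N c x y :
  E N c x y = (\poly_(i < N) \sum_(j < N) c i j * y ^+ j).[x].
Proof.
rewrite horner_poly /E; apply: eq_bigr => i _; rewrite mulr_suml.
by apply: eq_bigr => j _; rewrite -!mulrA [_ ^+ j * _]mulrC.
Qed.

Lemma E_polyy N c x y :
  E N c x y = \sum_(j < N) (\poly_(i < N) c i j).[x] * y ^+ j.
Proof.
rewrite /E exchange_big /=; apply: eq_bigr => j _; rewrite horner_poly mulr_suml.
by apply: eq_bigr.
Qed.


Lemma keyx N n s c :
  (forall i j, (n < i + j + s)%N -> c i j = 0) -> (n < N)%N ->
  (forall y, E N c 1 y = 0) -> (forall y, E N c (-1) y = 0) ->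
  exists d : nat -> nat -> R, (forall i j, (n < i + j + s + 2)%N -> d i j = 0) /\
    forall x y, E N c x y = (x ^+ 2 - 1) * E N d x y.
Proof.
move=> hc hn h1 hm1.
pose pj := fun j => \poly_(i < N) c i j.
have hsz : forall j, (size (pj j) <= n.+1 - (j + s))%N.
  move=> j; apply/leq_sizeP => t ht; rewrite coef_poly; case: ifP => // _.
  apply: hc; lia.
have hroot : forall z : R, (forall y, E N c z y = 0) -> forall j, (pj j).[z] = 0.
  move=> z hz j; case: (ltnP j N) => hj.
    have P0 : \poly_(j < N) (pj j).[z] = 0.
      apply: polyfin => y _ _; rewrite horner_poly -[RHS](hz y) E_polyy.
      by apply: eq_bigr.
    by move: (f_equal (fun p : {poly R} => p`_j) P0); rewrite coef_poly hj coef0.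
  have : size (pj j) == 0%N by have := hsz j; lia.
  by rewrite size_poly_eq0 => /eqP ->; rewrite horner0.
pose D : {poly R} := ('X - 1%:P) * ('X - (-1)%:P).
have hdvd : forall j, D %| pj j.
  move=> j; have [||q ->] := uniq_roots_prod_XsubC (p:=pj j) (rs:=[:: 1; -1]).
  3: by rewrite big_cons big_seq1 dvdp_mulIr.
  1: by rewrite /= !rootE hroot // hroot // !eqxx.
  rewrite uniq_rootsE /= inE andbT; apply/eqP => e.
  lra.
have hD : size D = 3%N.
  by rewrite size_mul ?polyXsubC_eq0 // !size_XsubC.
exists (fun i j => (pj j %/ D)`_i); split.
  move=> i j hij; set r := pj j %/ D.
  have hp := divpK (hdvd j).
  have [->|r0] := eqVneq r 0; first by rewrite coef0.
  apply: nth_default.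
  have : size (pj j) = (size r + 2)%N.
    rewrite -hp -/r size_mul ?r0 // ?hD; first by rewrite addnS.
    by rewrite -size_poly_eq0 hD.
  move=> e; have := hsz j; rewrite e. move: (size r) => q. move: hij. clear. lia.
move=> x y; rewrite !E_polyy mulr_sumr; apply: eq_bigr => j _.
have hr : (size (pj j %/ D)%R <= N)%N.
  exact: leq_trans (leq_divp (pj j) D) (size_poly _ _).
rewrite [in RHS]horner_poly -horner_coef_wide //.
rewrite (_ : \poly_(i < N) c i j = pj j) //.
rewrite -{1}(divpK (hdvd j)) hornerM (_ : D.[x] = x ^+ 2 - 1).
  by rewrite mulrCA mulrA.
by rewrite /D hornerM !hornerXsubC; ring.

Qed.

End Aux.
Section Leg.
Variable R : rcfType.

Lemma derivn_shift (p : {poly R}) n s :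
  (p^`(n)).[s] = (p \Po ('X + s%:P))`_n *+ n`!.
Proof.
have H : forall n, (p \Po ('X + s%:P))^`(n) = p^`(n) \Po ('X + s%:P).
  elim=> [|t IH]; first by rewrite !derivn0.
  by rewrite !derivnS IH deriv_comp derivD derivX derivC addr0 mulr1.
have := congr1 (fun q => q.[0]) (H n).
rewrite /= horner_comp hornerD hornerX hornerC add0r => <-.
by rewrite horner_coef0 coef_derivn addn0 ffactnn.
Qed.

Lemma D_shift n (s : R) : s ^+ 2 = 1 ->
  (('X ^+ 2 - 1) ^+ n \Po ('X + s%:P)) = 'X ^+ n * ('X + (2 * s)%:P) ^+ n.
Proof.
move=> hs; rewrite -exprMn rmorphXn /=; congr (_ ^+ _).
rewrite comp_polyB comp_polyC rmorphXn /= comp_polyX.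
have hs' : s%:P ^+ 2 = 1 :> {poly R} by rewrite -rmorphXn hs.
rewrite polyC1 -hs' polyCM rmorph_nat; ring.
Qed.



Lemma leg_val n (s : R) : s ^+ 2 = 1 -> (legendre R n).[s] = s ^+ n.
Proof.
move=> hs; rewrite /legendre hornerZ derivn_shift D_shift // coefXnM ltnn subnn.
rewrite -horner_coef0 horner_exp hornerD hornerX hornerC add0r.
rewrite exprMn -mulr_natr natrM natrX mulrA [_ * 2 ^+ n]mulrC.
have h2 : (2 : R) ^+ n != 0 by rewrite expf_neq0 // pnatr_eq0.
have hf : (n`!%:R : R) != 0 by rewrite pnatr_eq0 -lt0n fact_gt0.
field.
by rewrite h2 hf.
Qed.

Lemma legD n : ((('X ^+ 2 - 1 : {poly R}) ^+ n) \is monic) /\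
  size (('X ^+ 2 - 1 : {poly R}) ^+ n) = (n + n).+1.
Proof.
have hm : ('X ^+ 2 - 1 : {poly R}) \is monic by rewrite -polyC1 monicXnsubC.
have hmn := monic_exp n hm; split => //.
have := size_exp ('X ^+ 2 - 1 : {poly R}) n.
rewrite -polyC1 size_XnsubC //= => e.
rewrite -[LHS]prednK ?e; first by rewrite mul2n addnn.
rewrite lt0n size_poly_eq0; apply: monic_neq0; by rewrite polyC1.
Qed.

Lemma leg_coef n : (legendre R n)`_n != 0.
Proof.
have [hm hs] := legD n.
rewrite /legendre coefZ coef_derivn.
have -> : ((('X ^+ 2 - 1) ^+ n)`_(n + n) : R) = 1.
  by move/monicP: hm; rewrite lead_coefE hs.
rewrite mulf_neq0 // ?invr_eq0 pnatr_eq0 -lt0n ?muln_gt0 ?expn_gt0 ?fact_gt0 //.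
by rewrite ffact_gt0 leq_addr.
Qed.

Lemma leg_size n : (size (legendre R n) <= n.+1)%N.
Proof.
have [hm hs] := legD n.
apply/leq_sizeP => j hj; rewrite /legendre coefZ coef_derivn nth_default ?mul0rn ?mulr0 //.
rewrite hs; lia.
Qed.


Lemma legA (m : nat) (g : 'I_m -> R) (g_inj : injective g)
  (g_root : forall i, root (legendre R m) (g i)) (p : {poly R}) :
  (size p <= m.+1)%N -> (forall i, p.[g i] = 0) ->
  forall y, p.[y] * (legendre R m)`_m = p`_m * (legendre R m).[y].
Proof.
move=> hs hr y; set L := legendre R m.
pose q := L`_m *: p - p`_m *: L.
have hq0 : q = 0.
  case: (eqVneq q 0) => // hq; exfalso.
  have : (size (map g (enum 'I_m)) < size q)%N.
    apply: max_poly_roots => //.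
      apply/allP => z /mapP [i _ ->]; apply/rootP.
      have hL : L.[g i] = 0 := rootP (g_root i).
      by rewrite /q hornerD hornerN [(p`_m *: L).[_]]hornerZ hL [(_ *: p).[_]]hornerZ hr !mulr0 subr0.
    by rewrite map_inj_uniq ?enum_uniq.
  rewrite size_map size_enum_ord ltnNge => /negP; apply.
  apply/leq_sizeP => j hj; rewrite /q coefB [(_ *: p)`_j]coefZ [(_ *: L)`_j]coefZ.
  case: (eqVneq j m) => [->|hjm]; first by rewrite mulrC subrr.
  have hjm' : (m.+1 <= j)%N by rewrite ltn_neqAle eq_sym hjm hj.
  have hpj : p`_j = 0 by apply: nth_default; apply: leq_trans hs hjm'.
  have hLj : L`_j = 0 by apply: nth_default; apply: leq_trans (leg_size m) hjm'.
  by rewrite hpj hLj !mulr0 subrr.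
have := congr1 (fun r => r.[y]) hq0.
rewrite /q /= hornerD hornerN !hornerZ horner0 => /eqP; rewrite subr_eq0 => /eqP.
by rewrite mulrC => ->.
Qed.

End Leg.

Section Main.
Variable R : rcfType.

Lemma side_val N m (c : nat -> nat -> R) (s b y : R) :
  (\poly_(j < N) (\sum_(i < N) c i j * s ^+ i) + b *: ('X - 'X^m)).[y] =
  E N c s y + b * (y - y ^+ m).
Proof.
rewrite hornerD horner_poly E_polyy hornerZ hornerD hornerN hornerX hornerXn.
congr (_ + _); apply: eq_bigr => j _; by rewrite horner_poly.
Qed.

Lemma side_valy N m (c : nat -> nat -> R) (s b x : R) :
  (\poly_(i < N) (\sum_(j < N) c i j * s ^+ j) + b *: ('X - 'X^m)).[x] =
  E N c x s + b * (x - x ^+ m).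
Proof.
by rewrite hornerD -E_polyx hornerZ hornerD hornerN hornerX hornerXn.
Qed.

Lemma side_coef N m (F : nat -> R) b : (m < N)%N -> (b = 0 \/ m != 1%N) ->
  (\poly_(j < N) F j + b *: ('X - 'X^m))`_m = F m - b.
Proof.
move=> hm hb; rewrite coefD coef_poly hm coefZ coefB coefX coefXn eqxx.
case: hb => [->|/negPf ->]; first by rewrite mul0r subr0 addr0.
by rewrite /= sub0r mulrN1.
Qed.

Lemma side_size N m (F : nat -> R) b : (0 < m)%N -> (N <= m.+1)%N ->
  (size (\poly_(j < N) F j + b *: ('X - 'X^m))%R <= m.+1)%N.
Proof.
move=> hm hN; apply: leq_trans (size_polyD _ _) _; rewrite geq_max.
apply/andP; split; first exact: leq_trans (size_poly _ _) hN.
apply: leq_trans (size_scale_leq _ _) _.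
apply: leq_trans (size_polyD _ _) _; rewrite geq_max size_polyN size_polyX size_polyXn.
by rewrite leqnn andbT ltnS.
Qed.


Lemma sum_c0 N m (c : nat -> nat -> R) (s : R) : (0 < N)%N ->
  \sum_(i < N) trunc m c i m * s ^+ i = trunc m c 0 m.
Proof.
case: N => // N _; rewrite big_ord_recl /= expr0 mulr1 big1 ?addr0 // => i _.
by rewrite /trunc /bump /=; case: ifP => h; [exfalso; move: h; lia | rewrite mul0r].
Qed.

Lemma sum_cm0 N m (c : nat -> nat -> R) (s : R) : (0 < N)%N ->
  \sum_(j < N) trunc m c m j * s ^+ j = trunc m c m 0.
Proof.
case: N => // N _; rewrite big_ord_recl /= expr0 mulr1 big1 ?addr0 // => i _.
by rewrite /trunc /bump /=; case: ifP => h; [exfalso; move: h; lia | rewrite mul0r].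
Qed.

End Main.

Lemma main_lem (R : rcfType) (k : nat)
  (g : 'I_(2 * k + 1) -> R)
  (g_inj : injective g)
  (g_root : forall i, root (legendre R (2 * k + 1)) (g i))
  (I : seq (R * R))
  (I_interior : forall p, p \in I -> (-1 < p.1 < 1) && (-1 < p.2 < 1))
  (I_unisolvent : (1 < k)%N -> forall c d : nat -> nat -> R,
      (forall p, p \in I -> evalP (2 * k - 3) c p.1 p.2 = evalP (2 * k - 3) d p.1 p.2) ->
      forall x y : R, evalP (2 * k - 3) c x y = evalP (2 * k - 3) d x y)
  (c : nat -> nat -> R) (a : R)
  (hvanish : forall p, p \in gaussBoundary g ++ I ->
      evalR (2 * k + 1) c a p.1 p.2 = 0)
  (ha : a = 0 \/ (0 < k)%N) :
  forall x y : R, evalR (2 * k + 1) c a x y = 0.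
Proof.
move: g g_inj g_root hvanish; set m := (2 * k + 1)%N => g g_inj g_root hvanish.
have hm0 : (0 < m)%N by rewrite /m addn1.
pose N := m.+1; pose c' := trunc m c.
have hv : forall x y, evalR m c a x y = E N c' x y + a * (x ^+ m * y - x * y ^+ m).
  by move=> x y; rewrite /evalR (evalP_E _ _ _ (ltnSn m)).
have hodd : (-1 : R) ^+ m = -1.
  by rewrite -signr_odd /m addn1 /= oddM /= expr1.
have hb : forall b : R, b = a \/ b = - a -> b = 0 \/ m != 1%N.
  move=> b [->|->]; case: ha => [->|hk]; rewrite ?oppr0; try by left.
    by right; rewrite /m; lia.
  by right; rewrite /m; lia.
have inG : forall p, p \in gaussBoundary g -> E N c' p.1 p.2 + a * (p.1 ^+ m * p.2 - p.1 * p.2 ^+ m) = 0.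
  by move=> p hp; rewrite -hv; apply: hvanish; rewrite mem_cat hp.
set L := legendre R m.
have hl : L`_m != 0 by exact: leg_coef.
have L1 : L.[1] = 1 by rewrite leg_val ?expr1n.
have Lm1 : L.[-1] = -1 by rewrite leg_val ?hodd // sqrrN expr1n.
pose pX s b := \poly_(j < N) (\sum_(i < N) c' i j * s ^+ i) + b *: ('X - 'X^m).
pose pY s b := \poly_(i < N) (\sum_(j < N) c' i j * s ^+ j) + b *: ('X - 'X^m).
have sX : forall s b, (size (pX s b) <= m.+1)%N by move=> s b; apply: side_size.
have sY : forall s b, (size (pY s b) <= m.+1)%N by move=> s b; apply: side_size.
have cX : forall s b, (b = a \/ b = - a) -> (pX s b)`_m = c' 0%N m - b.
  move=> s b hb'; rewrite side_coef; last exact: hb.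
    by rewrite /c' (@sum_c0 R N m c s).
  by [].
have cY : forall s b, (b = a \/ b = - a) -> (pY s b)`_m = c' m 0%N - b.
  move=> s b hb'; rewrite side_coef; last exact: hb.
    by rewrite /c' (@sum_cm0 R N m c s).
  by [].
have vX1 : forall y, (pX 1 a).[y] = evalR m c a 1 y.
  by move=> y; rewrite side_val hv expr1n !mul1r.
have vXm1 : forall y, (pX (-1) (- a)).[y] = evalR m c a (-1) y.
  by move=> y; rewrite side_val hv hodd; ring.
have vY1 : forall x, (pY 1 (- a)).[x] = evalR m c a x 1.
  by move=> x; rewrite side_valy hv expr1n; ring.
have vYm1 : forall x, (pY (-1) a).[x] = evalR m c a x (-1).
  by move=> x; rewrite side_valy hv hodd; ring.
have gmem : forall i, [/\ (1, g i) \in gaussBoundary g, (-1, g i) \in gaussBoundary g,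
    (g i, 1) \in gaussBoundary g & (g i, -1) \in gaussBoundary g].
  move=> i; rewrite /gaussBoundary !mem_cat.
  have hi : i \in enum 'I_m by rewrite mem_enum.
  by rewrite !(map_f _ hi) ?orbT.
have ev : forall p, p \in gaussBoundary g -> evalR m c a p.1 p.2 = 0.
  by move=> p hp; apply: hvanish; rewrite mem_cat hp.
have eX1 : forall y, (pX 1 a).[y] * L`_m = (pX 1 a)`_m * L.[y].
  apply: (legA g_inj g_root (sX 1 a)) => i; rewrite vX1.
  by case: (gmem i) => h _ _ _; exact: (ev _ h).
have eXm1 : forall y, (pX (-1) (-a)).[y] * L`_m = (pX (-1) (-a))`_m * L.[y].
  apply: (legA g_inj g_root (sX (-1) (-a))) => i; rewrite vXm1.
  by case: (gmem i) => _ h _ _; exact: (ev _ h).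
have eY1 : forall y, (pY 1 (-a)).[y] * L`_m = (pY 1 (-a))`_m * L.[y].
  apply: (legA g_inj g_root (sY 1 (-a))) => i; rewrite vY1.
  by case: (gmem i) => _ _ h _; exact: (ev _ h).
have eYm1 : forall y, (pY (-1) a).[y] * L`_m = (pY (-1) a)`_m * L.[y].
  apply: (legA g_inj g_root (sY (-1) a)) => i; rewrite vYm1.
  by case: (gmem i) => _ _ _ h; exact: (ev _ h).
rewrite !cX ?cY in eX1 eXm1 eY1 eYm1; try by [left | right].
have k1 := eX1 1; rewrite vX1 -vY1 eY1 L1 in k1.
have k2 := eX1 (-1); rewrite vX1 -vYm1 eYm1 L1 Lm1 in k2.
have k3 := eXm1 1; rewrite vXm1 -vY1 eY1 L1 Lm1 in k3.
have a0 : a = 0 by lra.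
have z1 : c' 0%N m - a = 0 by lra.
have z2 : c' 0%N m - - a = 0 by lra.
have z3 : c' m 0%N - - a = 0 by lra.
have z4 : c' m 0%N - a = 0 by lra.
have van : forall (P : {poly R}) (t : R), (forall y, P.[y] * L`_m = t * L.[y]) -> t = 0 ->
    forall y, P.[y] = 0.
  move=> P t hP ht y; apply/eqP; rewrite -(mulIr_eq0 _ (mulIf hl)).
  by rewrite hP ht mul0r.
have E1 : forall y, E N c' 1 y = 0.
  by move=> y; have := van _ _ eX1 z1 y; rewrite /pX side_val a0 mul0r addr0.
have Em1 : forall y, E N c' (-1) y = 0.
  by move=> y; have := van _ _ eXm1 z2 y; rewrite /pX side_val a0 oppr0 mul0r addr0.
have E1' : forall x, E N c' x 1 = 0.
  by move=> x; have := van _ _ eY1 z3 x; rewrite /pY side_valy a0 oppr0 mul0r addr0.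
have Em1' : forall x, E N c' x (-1) = 0.
  by move=> x; have := van _ _ eYm1 z4 x; rewrite /pY side_valy a0 mul0r addr0.
have hc0 : forall i j, (m < i + j + 0)%N -> c' i j = 0.
  by move=> i j h; rewrite /c' /trunc; case: ifP => // h'; exfalso; move: h h'; lia.
have [d [hd hcd]] := keyx (N:=N) (n:=m) (s:=0%N) (c:=c') hc0 (ltnSn m) E1 Em1.
have sq1 : forall z : R, z != 1 -> z != -1 -> z ^+ 2 - 1 != 0.
  by move=> z h1 h2; rewrite subr_eq0 sqrf_eq1 negb_or h1 h2.
have Eds : forall s : R, (forall x, E N c' x s = 0) -> forall x, E N d x s = 0.
  move=> s hs x.
  have P0 : (\poly_(i < N) \sum_(j < N) d i j * s ^+ j) = 0.
    apply: polyfin => z hz1 hzm1; rewrite -E_polyx.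
    have := hs z; rewrite hcd => /eqP; rewrite mulf_eq0 (negPf (sq1 _ hz1 hzm1)) /=.
    by move/eqP.
  by rewrite E_polyx P0 horner0.
have hc2 : forall i j, (m < i + j + 2)%N -> (fun i j => d j i) i j = 0.
  by move=> i j h; apply: hd; lia.
have Ed1 : forall y, E N (fun i j => d j i) 1 y = 0.
  by move=> y; rewrite E_tr; apply: Eds.
have Edm1 : forall y, E N (fun i j => d j i) (-1) y = 0.
  by move=> y; rewrite E_tr; apply: Eds.
have [e [he hde]] := keyx (N:=N) (n:=m) (s:=2%N) (c:=fun i j => d j i) hc2 (ltnSn m) Ed1 Edm1.
have fac : forall x y, evalR m c a x y = (x ^+ 2 - 1) * (y ^+ 2 - 1) * E N (fun i j => e j i) x y.
  move=> x y; rewrite hv a0 mul0r addr0 hcd -mulrA; congr (_ * _).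
  have -> : E N d x y = E N (fun i j => d j i) y x by apply: E_tr.
  by rewrite hde; congr (_ * _); apply: E_tr.
have he' : forall i j, (m < i + j + 4)%N -> e i j = 0.
  by move=> i j h; apply: he; lia.
case: (leqP k 1) => hk.
  move=> x y; rewrite fac /E big1 ?mulr0 // => i _; rewrite big1 // => j _.
  by rewrite he' ?mul0r //; rewrite /m; lia.
have eP : forall x y, evalP (2 * k - 3) (fun i j => e j i) x y = E N (fun i j => e j i) x y.
  move=> x y; rewrite (@evalP_E R (2 * k - 3) N); last by rewrite /N /m; lia.
  apply: eq_bigr => i _; apply: eq_bigr => j _; rewrite /trunc; case: ifP => // h.
  by rewrite he' ?mul0r //; move: h; rewrite /m; lia.
have e0 : forall x y, evalP (2 * k - 3) (fun _ _ => 0 : R) x y = 0.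
  by move=> x y; rewrite /evalP big1 // => i _; rewrite big1 // => j _; rewrite !mul0r.
have hI : forall p, p \in I -> E N (fun i j => e j i) p.1 p.2 = 0.
  move=> p hp; have := hvanish p; rewrite mem_cat hp orbT fac => /(_ isT) /eqP.
  have /andP [/andP [h1 h2] /andP [h3 h4]] := I_interior p hp.
  have n1 : p.1 ^+ 2 - 1 != 0 by rewrite lt_eqF // expr2; nra.
  have n2 : p.2 ^+ 2 - 1 != 0 by rewrite lt_eqF // expr2; nra.
  by rewrite !mulf_eq0 (negPf n1) (negPf n2) /= => /eqP.
move=> x y; rewrite fac -eP (I_unisolvent hk _ (fun _ _ => 0)) ?e0 ?mulr0 //.
by move=> p hp; rewrite e0 eP hI.
Qed.

Theorem theorem2p1 (R : rcfType) (k : nat)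
  (g : 'I_(2 * k + 1) -> R)
  (g_inj : injective g)
  (g_root : forall i, root (legendre R (2 * k + 1)) (g i))
  (I : seq (R * R))
  (I_uniq : uniq I)
  (I_size : size I = ((2 * k - 1) * (k - 1))%N)
  (I_interior : forall p, p \in I -> (-1 < p.1 < 1) && (-1 < p.2 < 1))
  (I_unisolvent : (1 < k)%N -> forall c d : nat -> nat -> R,
      (forall p, p \in I -> evalP (2 * k - 3) c p.1 p.2 = evalP (2 * k - 3) d p.1 p.2) ->
      forall x y : R, evalP (2 * k - 3) c x y = evalP (2 * k - 3) d x y)
  (c : nat -> nat -> R) (a : R)
  (hvanish : forall p, p \in gaussBoundary g ++ I ->
      evalR (2 * k + 1) c a p.1 p.2 = 0) :
  forall x y : R, evalR (2 * k + 1) c a x y = 0.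
Proof.
case: (posnP k) => hk; last by apply: (main_lem g_inj g_root I_interior I_unisolvent hvanish); right.
have e : forall x y, evalR (2 * k + 1) c a x y = evalR (2 * k + 1) c 0 x y.
  by move=> x y; rewrite /evalR hk /= !expr1 (mulrC x y) subrr !mulr0.
move=> x y; rewrite e; apply: (main_lem g_inj g_root I_interior I_unisolvent); last by left.
by move=> p hp; rewrite -e; apply: hvanish.
Qed.
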